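(* For any smooth function $f$ on the total space $\mathfrak X$ and all $k,l$, $$\overline{v_l}(\xi_kf)-\xi_k(\overline{v_l}f)=\bar P(e_{k\bar l})P(f)-2f_{k\bar l}\Box f+\lambda^{-1}\partial_zf_{k\bar l}\,\partial_{\bar z}f.$$
   Context: $g\ge2$, $n=3g-3$. Over a local chart of (a manifold cover of) $\mathcal M_g$ with holomorphic coordinates $s_1,\dots,s_n$, $\partial_i=\partial/\partial s_i$, let $\mathfrak X$ be the universal family with local fiber coordinate $z$. Each fiber carries the hyperbolic metric $\frac{\sqrt{-1}}2\lambda\,dz\wedge d\bar z$ with $\partial_z\partial_{\bar z}\log\lambda=\lambda$. $a_i=-\lambda^{-1}\partial_i\partial_{\bar z}\log\lambda$, $A_i=\partial_{\bar z}a_i$, $v_i=\partial_i+a_i\partial_z$, $\overline{v_l}$ its complex conjugate. $\Box=-\lambda^{-1}\partial_z\partial_{\bar z}$. $e_{i\bar j}=\partial_i\partial_{\bar j}\log\lambda-\lambda a_i\overline{a_j}$, $f_{i\bar j}=A_i\overline{A_j}$. $P(f)=\partial_z(\lambda^{-1}\partial_zf)$, $\bar P(f)=\partial_{\bar z}(\lambda^{-1}\partial_{\bar z}f)$, $\xi_k(f)=-\lambda^{-1}\partial_z(A_k\partial_zf)$. *)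

(* Defs.v *)
(* Local chart of the universal family:
   a point is (s, z) with s : nat -> C the base coordinates (only s_0..s_{n-1}
   are meaningful) and z : C the fiber coordinate. Functions are C-valued. *)
From Stdlib Require Import Reals List.
From Coquelicot Require Import Coquelicot.
Import ListNotations.

Definition Pt : Type := ((nat -> C) * C)%type.

Inductive dir := DReS (i : nat) | DImS (i : nat) | DReZ | DImZ.

Definition move (d : dir) (t : R) (p : Pt) : Pt :=
  match d with
  | DReS i => (fun j => if Nat.eqb j i then Cplus (fst p j) (RtoC t) else fst p j, snd p)
  | DImS i => (fun j => if Nat.eqb j i then Cplus (fst p j) (0%R, t) else fst p j, snd p)
  | DReZ => (fst p, Cplus (snd p) (RtoC t))
  | DImZ => (fst p, Cplus (snd p) (0%R, t))
  end.

Definition pd (d : dir) (f : Pt -> C) (p : Pt) : C :=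
  (Derive (fun t => Re (f (move d t p))) 0, Derive (fun t => Im (f (move d t p))) 0).

Local Open Scope C_scope.

Definition ds (i : nat) (f : Pt -> C) (p : Pt) : C :=
  / 2 * (pd (DReS i) f p - Ci * pd (DImS i) f p).
Definition dsb (i : nat) (f : Pt -> C) (p : Pt) : C :=
  / 2 * (pd (DReS i) f p + Ci * pd (DImS i) f p).
Definition dz (f : Pt -> C) (p : Pt) : C :=
  / 2 * (pd DReZ f p - Ci * pd DImZ f p).
Definition dzb (f : Pt -> C) (p : Pt) : C :=
  / 2 * (pd DReZ f p + Ci * pd DImZ f p).

Local Close Scope C_scope.

Definition relevant (n : nat) (d : dir) : Prop :=
  match d with DReS i | DImS i => (i < n)%nat | _ => True end.

Fixpoint iter_pd (l : list dir) (f : Pt -> C) : Pt -> C :=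
  match l with nil => f | d :: l' => pd d (iter_pd l' f) end.

Definition near_pt (n : nat) (delta : R) (p q : Pt) : Prop :=
  (forall i, (i < n)%nat -> Cmod (Cminus (fst q i) (fst p i)) < delta) /\
  (forall i, (n <= i)%nat -> fst q i = fst p i) /\
  Cmod (Cminus (snd q) (snd p)) < delta.

Definition open_chart (n : nat) (U : Pt -> Prop) : Prop :=
  forall p, U p -> exists delta, 0 < delta /\ forall q, near_pt n delta p q -> U q.

Definition cont_on (n : nat) (U : Pt -> Prop) (g : Pt -> C) : Prop :=
  forall p, U p -> forall eps, 0 < eps -> exists delta, 0 < delta /\
    forall q, U q -> near_pt n delta p q -> Cmod (Cminus (g q) (g p)) < eps.

Definition smooth (n : nat) (U : Pt -> Prop) (f : Pt -> C) : Prop :=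
  forall l : list dir, List.Forall (relevant n) l ->
    cont_on n U (iter_pd l f) /\
    forall d, relevant n d -> forall p, U p ->
      ex_derive (fun t => Re (iter_pd l f (move d t p))) 0 /\
      ex_derive (fun t => Im (iter_pd l f (move d t p))) 0.

Local Open Scope C_scope.
Section Objects.
Variable lam : Pt -> R.

Definition loglam (p : Pt) : C := RtoC (ln (lam p)).
Definition lamC (p : Pt) : C := RtoC (lam p).

Definition a_ (i : nat) (p : Pt) : C := - (/ lamC p * ds i (dzb loglam) p).
Definition A_ (i : nat) : Pt -> C := dzb (a_ i).
Definition v_ (i : nat) (f : Pt -> C) (p : Pt) : C := ds i f p + a_ i p * dz f p.
(* complex conjugate of v_l : conj(d/ds_l) + conj(a_l) d/dzbar *)
Definition vbar_ (l : nat) (f : Pt -> C) (p : Pt) : C :=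
  dsb l f p + Cconj (a_ l p) * dzb f p.
Definition Box (f : Pt -> C) (p : Pt) : C := - (/ lamC p * dz (dzb f) p).
Definition e_ (k l : nat) (p : Pt) : C :=
  ds k (dsb l loglam) p - lamC p * a_ k p * Cconj (a_ l p).
Definition f_ (k l : nat) (p : Pt) : C := A_ k p * Cconj (A_ l p).
Definition P_ (f : Pt -> C) : Pt -> C := dz (fun p => / lamC p * dz f p).
Definition Pb_ (f : Pt -> C) : Pt -> C := dzb (fun p => / lamC p * dzb f p).
Definition xi_ (k : nat) (f : Pt -> C) (p : Pt) : C :=
  - (/ lamC p * dz (fun q => A_ k q * dz f q) p).
End Objects.
Local Close Scope C_scope.

(* Main.v *)
Require Import Defs.
From Stdlib Require Import Reals List Lra Permutation FunctionalExtensionality ZArith Lia.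
From Coquelicot Require Import Coquelicot.
Import ListNotations.
Local Open Scope R_scope.

Lemma locally0 (P : R -> Prop) (dl : R) : 0 < dl -> (forall t, Rabs t < dl -> P t) -> locally 0 P.
Proof.
  intros Hd H. exists (mkposreal dl Hd). intros y Hy. apply H.
  unfold ball in Hy; simpl in Hy; unfold AbsRing_ball in Hy; simpl in Hy.
  unfold abs, minus, plus, opp in Hy; simpl in Hy. now rewrite Ropp_0, Rplus_0_r in Hy.
Qed.

Lemma Cmod_im (t : R) : Cmod ((0%R, t) : C) = Rabs t.
Proof.
  unfold Cmod; simpl. replace (0*(0*1) + t*(t*1)) with (Rsqr t) by (unfold Rsqr; ring).
  apply sqrt_Rsqr_abs.
Qed.

Lemma Cmod_sub_self (z : C) : Cmod (Cminus z z) = 0.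
Proof. replace (Cminus z z) with (RtoC 0) by (apply injective_projections; simpl; ring).
  rewrite Cmod_R; apply Rabs_R0. Qed.

Lemma near_pt_refl n dl p : 0 < dl -> near_pt n dl p p.
Proof.
  intros H; split; [|split].
  - intros i _; now rewrite Cmod_sub_self.
  - auto.
  - now rewrite Cmod_sub_self.
Qed.

Lemma near_pt_mono n d1 d2 p q : d1 <= d2 -> near_pt n d1 p q -> near_pt n d2 p q.
Proof.
  intros H [H1 [H2 H3]]; split; [|split]; auto.
  - intros i Hi; specialize (H1 i Hi); lra.
  - lra.
Qed.

Lemma Cmod_shift (a b c : C) : Cmod (Cminus (Cplus a c) b) <= Cmod (Cminus a b) + Cmod c.
Proof.
  replace (Cminus (Cplus a c) b) with (Cplus (Cminus a b) c) by (apply injective_projections; simpl; ring).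
  apply Cmod_triangle.
Qed.

Lemma near_move n d1 d2 p q d t :
  relevant n d -> near_pt n d1 p q -> Rabs t < d2 -> near_pt n (d1 + d2) p (move d t q).
Proof.
  intros Hr [H1 [H2 H3]] Ht. pose proof (Rabs_pos t).
  destruct d as [i|i| |]; simpl in Hr |- *; split; [| split | | split | | split | | split ]; simpl.
  - intros j Hj. destruct (Nat.eqb j i).
    + eapply Rle_lt_trans; [apply Cmod_shift|]. rewrite Cmod_R. specialize (H1 j Hj); lra.
    + specialize (H1 j Hj); lra.
  - intros j Hj. destruct (Nat.eqb j i) eqn:E.
    + apply Nat.eqb_eq in E; lia.
    + auto.
  - lra.
  - intros j Hj. destruct (Nat.eqb j i).
    + eapply Rle_lt_trans; [apply Cmod_shift|]. rewrite Cmod_im. specialize (H1 j Hj); lra.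
    + specialize (H1 j Hj); lra.
  - intros j Hj. destruct (Nat.eqb j i) eqn:E.
    + apply Nat.eqb_eq in E; lia.
    + auto.
  - lra.
  - intros j Hj; specialize (H1 j Hj); lra.
  - auto.
  - eapply Rle_lt_trans; [apply Cmod_shift|]. rewrite Cmod_R. lra.
  - intros j Hj; specialize (H1 j Hj); lra.
  - auto.
  - eapply Rle_lt_trans; [apply Cmod_shift|]. rewrite Cmod_im. lra.
Qed.

Lemma near_move0 n dl p d t : relevant n d -> 0 < dl -> Rabs t < dl -> near_pt n dl p (move d t p).
Proof.
  intros Hr Hd Ht.
  assert (Hh : 0 < (dl - Rabs t)/2) by lra.
  apply near_pt_mono with ((dl - Rabs t)/2 + (Rabs t + (dl - Rabs t)/2)); [lra|].
  apply near_move; auto. apply near_pt_refl; auto. lra.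
Qed.

Lemma move_move d s t p : move d t (move d s p) = move d (s + t) p.
Proof.
  destruct p as [sp z]; destruct d as [i|i| |]; simpl; f_equal;
    try (apply functional_extensionality; intro j; destruct (Nat.eqb j i));
    try (apply injective_projections; simpl; ring); auto.
Qed.

Lemma move_comm d1 d2 s t p : move d1 s (move d2 t p) = move d2 t (move d1 s p).
Proof.
  destruct p as [sp z]; destruct d1 as [i|i| |]; destruct d2 as [i'|i'| |]; simpl; f_equal;
    try (apply functional_extensionality; intro j; destruct (Nat.eqb j i); destruct (Nat.eqb j i'));
    try (apply injective_projections; simpl; ring); auto.
Qed.

Lemma Derive_shift (f : R -> R) x : Derive f x = Derive (fun h => f (x + h)) 0.
Proof.
  unfold Derive. f_equal. apply Lim_ext. intro y. now rewrite Rplus_0_l, Rplus_0_r.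
Qed.

Lemma ex_derive_shift (f : R -> R) x : ex_derive (fun h => f (x + h)) 0 -> ex_derive f x.
Proof.
  intro H.
  assert (H2 : ex_derive (fun y => (fun h => f (x + h)) (y - x)) x).
  { apply (ex_derive_comp (fun h => f (x + h)) (fun y => y - x)). rewrite Rminus_diag. exact H. auto_derive; auto. }
  eapply ex_derive_ext; [|exact H2]. intro t; simpl. f_equal; ring.
Qed.

Lemma move_0 d p : move d 0 p = p.
Proof.
  destruct p as [sp z]; destruct d as [i|i| |]; simpl; f_equal;
    try (apply functional_extensionality; intro j; destruct (Nat.eqb j i));
    try (apply injective_projections; simpl; ring); auto.
Qed.

Lemma cont_R_eps (h : R -> R) x : continuous h x ->
  forall eps, 0 < eps -> exists dl, 0 < dl /\ forall y, Rabs (y - x) < dl -> Rabs (h y - h x) < eps.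
Proof.
  intros H eps He.
  destruct (proj1 (filterlim_locally _ _) H (mkposreal eps He)) as [dl Hdl].
  exists dl; split. apply cond_pos. intros y Hy. apply (Hdl y). exact Hy.
Qed.

Lemma RtoC_mult' (a b : R) : RtoC (a * b) = Cmult (RtoC a) (RtoC b).
Proof. apply injective_projections; simpl; ring. Qed.
Lemma RtoC_minus' (a b : R) : RtoC (a - b) = Cminus (RtoC a) (RtoC b).
Proof. apply injective_projections; simpl; ring. Qed.
Section Smooth.
Variable n : nat.
Variable U : Pt -> Prop.
Hypothesis hU : open_chart n U.

Definition eqU (F G : Pt -> C) := forall p, U p -> F p = G p.

Lemma eqU_refl F : eqU F F. Proof. intros p _; auto. Qed.
Lemma eqU_sym F G : eqU F G -> eqU G F. Proof. intros H p Hp; symmetry; auto. Qed.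
Lemma eqU_trans F G H : eqU F G -> eqU G H -> eqU F H.
Proof. intros H1 H2 p Hp; rewrite H1; auto. Qed.

Definition C1 (F : Pt -> C) := cont_on n U F /\ forall d, relevant n d -> forall p, U p ->
  ex_derive (fun t => Re (F (move d t p))) 0 /\ ex_derive (fun t => Im (F (move d t p))) 0.

Lemma U_loc d p : relevant n d -> U p -> exists dl, 0 < dl /\ forall t, Rabs t < dl -> U (move d t p).
Proof.
  intros Hr Hp. destruct (hU p Hp) as [dl [Hd H]]. exists dl; split; auto.
  intros t Ht. apply H. apply near_move0; auto.
Qed.

Lemma loc_eq F G d p : relevant n d -> U p -> eqU F G ->
  locally 0 (fun t => F (move d t p) = G (move d t p)).
Proof.
  intros Hr Hp HE. destruct (U_loc d p Hr Hp) as [dl [Hd H]].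
  apply (locally0 _ dl Hd). intros; apply HE; auto.
Qed.

Lemma pd_loc F G d : relevant n d -> eqU F G -> eqU (pd d F) (pd d G).
Proof.
  intros Hr HE p Hp. unfold pd. f_equal; apply Derive_ext_loc;
  generalize (loc_eq F G d p Hr Hp HE); apply filter_imp; intros t Ht; now rewrite Ht.
Qed.

Lemma C1_loc F G : eqU F G -> C1 F -> C1 G.
Proof.
  intros HE [Hc Hd]. split.
  - intros p Hp eps He. destruct (Hc p Hp eps He) as [dl [Hdl H]].
    exists dl; split; auto. intros q Hq Hn. rewrite <- !HE; auto.
  - intros d Hr p Hp. destruct (Hd d Hr p Hp) as [H1 H2].
    generalize (loc_eq F G d p Hr Hp HE); intro L.
    split; [eapply ex_derive_ext_loc; [|exact H1] | eapply ex_derive_ext_loc; [|exact H2]];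
      (eapply filter_imp; [|exact L]); intros t Ht; simpl; now rewrite Ht.
Qed.

Lemma iter_pd_app l1 l2 F : iter_pd (l1 ++ l2) F = iter_pd l1 (iter_pd l2 F).
Proof. induction l1; simpl; auto. now rewrite IHl1. Qed.

Lemma smooth_C1 F : smooth n U F -> C1 F.
Proof. intro H. apply (H nil). constructor. Qed.

Lemma smooth_pd F d : relevant n d -> smooth n U F -> smooth n U (pd d F).
Proof.
  intros Hr H l Hl. change (pd d F) with (iter_pd [d] F). rewrite <- iter_pd_app.
  apply H. apply Forall_app; auto.
Qed.

Lemma smooth_coind (Q : (Pt -> C) -> Prop) :
  (forall F, Q F -> C1 F /\ forall d, relevant n d -> Q (pd d F)) ->
  forall F, Q F -> smooth n U F.
Proof.
  intros HQ F QF l Hl. revert F QF. induction l as [|d l IH] using rev_ind; intros F QF.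
  - apply (HQ F QF).
  - rewrite iter_pd_app. apply Forall_app in Hl as [Hl1 Hl2]. inversion Hl2; subst.
    apply IH; auto. apply (HQ F QF); auto.
Qed.

Lemma smooth_loc F G : eqU F G -> smooth n U F -> smooth n U G.
Proof.
  intros HE HF. apply (smooth_coind (fun H => exists F, smooth n U F /\ eqU F H)); [|eauto].
  intros H [F' [HF' HE']]. split.
  - eapply C1_loc; eauto. now apply smooth_C1.
  - intros d Hr. exists (pd d F'). split. now apply smooth_pd. now apply pd_loc.
Qed.

Definition contp (F : Pt -> C) p := forall eps, 0 < eps -> exists dl, 0 < dl /\
    forall q, U q -> near_pt n dl p q -> Cmod (Cminus (F q) (F p)) < eps.

Lemma min_near p (P Q : Pt -> Prop) :
  (exists d1, 0 < d1 /\ forall q, U q -> near_pt n d1 p q -> P q) ->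
  (exists d2, 0 < d2 /\ forall q, U q -> near_pt n d2 p q -> Q q) ->
  exists d, 0 < d /\ forall q, U q -> near_pt n d p q -> P q /\ Q q.
Proof.
  intros [d1 [H1 K1]] [d2 [H2 K2]]. exists (Rmin d1 d2); split.
  - now apply Rmin_pos.
  - intros q Hq Hn; split; [apply K1|apply K2]; auto; eapply near_pt_mono; eauto.
    apply Rmin_l. apply Rmin_r.
Qed.

Lemma contp_add F G p : contp F p -> contp G p -> contp (fun q => Cplus (F q) (G q)) p.
Proof.
  intros HF HG eps He. assert (He2 : 0 < eps/2) by lra.
  destruct (min_near p _ _ (HF (eps/2) He2) (HG (eps/2) He2)) as [d [Hd K]].
  exists d; split; auto. intros q Hq Hn. destruct (K q Hq Hn) as [K1 K2].
  replace (Cminus (Cplus (F q) (G q)) (Cplus (F p) (G p)))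
    with (Cplus (Cminus (F q) (F p)) (Cminus (G q) (G p)))
    by (apply injective_projections; simpl; ring).
  eapply Rle_lt_trans; [apply Cmod_triangle|]. lra.
Qed.

Lemma contp_mul F G p : contp F p -> contp G p -> contp (fun q => Cmult (F q) (G q)) p.
Proof.
  intros HF HG eps He.
  set (a := Cmod (F p)). set (b := Cmod (G p)).
  assert (Ha : 0 <= a) by apply Cmod_ge_0. assert (Hb : 0 <= b) by apply Cmod_ge_0.
  set (e1 := eps / (2 * (b + 1))). set (e2 := Rmin 1 (eps / (2 * (a + 1)))).
  assert (He1 : 0 < e1) by (unfold e1; apply Rdiv_lt_0_compat; lra).
  assert (He2 : 0 < e2) by (unfold e2; apply Rmin_pos; [lra|apply Rdiv_lt_0_compat; lra]).
  destruct (min_near p _ _ (HF e1 He1) (HG e2 He2)) as [d [Hd K]].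
  exists d; split; auto. intros q Hq Hn. destruct (K q Hq Hn) as [K1 K2].
  replace (Cminus (Cmult (F q) (G q)) (Cmult (F p) (G p)))
    with (Cplus (Cmult (Cminus (F q) (F p)) (G q)) (Cmult (F p) (Cminus (G q) (G p))))
    by (apply injective_projections; simpl; ring).
  eapply Rle_lt_trans; [apply Cmod_triangle|]. rewrite !Cmod_mult.
  assert (HGq : Cmod (G q) <= b + 1).
  { replace (G q) with (Cplus (G p) (Cminus (G q) (G p))) by (apply injective_projections; simpl; ring).
    eapply Rle_trans; [apply Cmod_triangle|]. fold b. assert (e2 <= 1) by apply Rmin_l. lra. }
  assert (E2 : e2 <= eps / (2 * (a + 1))) by apply Rmin_r.
  assert (T1 : Cmod (Cminus (F q) (F p)) * Cmod (G q) <= e1 * (b + 1)).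
  { apply Rmult_le_compat; try apply Cmod_ge_0; lra. }
  assert (T2 : a * Cmod (Cminus (G q) (G p)) <= a * e2).
  { apply Rmult_le_compat_l; lra. }
  assert (T3 : e1 * (b + 1) = eps / 2) by (unfold e1; field; lra).
  assert (T4 : a * e2 <= a * (eps / (2 * (a + 1)))) by (apply Rmult_le_compat_l; lra).
  assert (T5 : a * (eps / (2 * (a + 1))) < eps / 2).
  { replace (a * (eps / (2 * (a + 1)))) with ((eps / 2) * (a / (a + 1))) by (field; lra).
    assert (a / (a + 1) < 1).
    { assert (0 < 1/(a+1)) by (apply Rdiv_lt_0_compat; lra).
      replace (a/(a+1)) with (1 - 1/(a+1)) by (field; lra). lra. }
    assert (0 < eps / 2) by lra. nra. }
  fold a. lra.
Qed.

Lemma C1_const c : C1 (fun _ => c).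
Proof.
  split.
  - intros p Hp eps He. exists 1; split; [lra|]. intros q _ _. rewrite Cmod_sub_self; lra.
  - intros d Hr p Hp; split; apply ex_derive_const.
Qed.

Lemma C1_add F G : C1 F -> C1 G -> C1 (fun q => Cplus (F q) (G q)).
Proof.
  intros [HcF HdF] [HcG HdG]. split.
  - intros p Hp. apply contp_add; [exact (HcF p Hp)|exact (HcG p Hp)].
  - intros d Hr p Hp. destruct (HdF d Hr p Hp) as [F1 F2]. destruct (HdG d Hr p Hp) as [G1 G2].
    split.
    + apply (ex_derive_plus (fun t => Re (F (move d t p))) (fun t => Re (G (move d t p)))); auto.
    + apply (ex_derive_plus (fun t => Im (F (move d t p))) (fun t => Im (G (move d t p)))); auto.
Qed.

Lemma C1_mul F G : C1 F -> C1 G -> C1 (fun q => Cmult (F q) (G q)).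
Proof.
  intros [HcF HdF] [HcG HdG]. split.
  - intros p Hp. apply contp_mul; [exact (HcF p Hp)|exact (HcG p Hp)].
  - intros d Hr p Hp. destruct (HdF d Hr p Hp) as [F1 F2]. destruct (HdG d Hr p Hp) as [G1 G2].
    split.
    + apply (ex_derive_minus (fun t => Re (F (move d t p)) * Re (G (move d t p)))
                             (fun t => Im (F (move d t p)) * Im (G (move d t p))));
      apply ex_derive_mult; auto.
    + apply (ex_derive_plus (fun t => Re (F (move d t p)) * Im (G (move d t p)))
                            (fun t => Im (F (move d t p)) * Re (G (move d t p))));
      apply ex_derive_mult; auto.
Qed.

Lemma pd_const c d p : pd d (fun _ => c) p = RtoC 0.
Proof. unfold pd. now rewrite !Derive_const. Qed.

Lemma pd_add F G d p : C1 F -> C1 G -> relevant n d -> U p ->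
  pd d (fun q => Cplus (F q) (G q)) p = Cplus (pd d F p) (pd d G p).
Proof.
  intros [_ HdF] [_ HdG] Hr Hp.
  destruct (HdF d Hr p Hp) as [F1 F2]. destruct (HdG d Hr p Hp) as [G1 G2].
  change (pd d (fun q => Cplus (F q) (G q)) p) with
    (Derive (fun t => Re (F (move d t p)) + Re (G (move d t p))) 0,
     Derive (fun t => Im (F (move d t p)) + Im (G (move d t p))) 0).
  rewrite !Derive_plus by auto. reflexivity.
Qed.

Lemma pd_mul F G d p : C1 F -> C1 G -> relevant n d -> U p ->
  pd d (fun q => Cmult (F q) (G q)) p = Cplus (Cmult (pd d F p) (G p)) (Cmult (F p) (pd d G p)).
Proof.
  intros [_ HdF] [_ HdG] Hr Hp.
  destruct (HdF d Hr p Hp) as [F1 F2]. destruct (HdG d Hr p Hp) as [G1 G2].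
  change (pd d (fun q => Cmult (F q) (G q)) p) with
    (Derive (fun t => Re (F (move d t p)) * Re (G (move d t p)) - Im (F (move d t p)) * Im (G (move d t p))) 0,
     Derive (fun t => Re (F (move d t p)) * Im (G (move d t p)) + Im (F (move d t p)) * Re (G (move d t p))) 0).
  rewrite Derive_minus, Derive_plus by (apply ex_derive_mult; auto).
  rewrite !Derive_mult by auto. rewrite !move_0.
  unfold pd. apply injective_projections; unfold Re, Im; simpl; ring.
Qed.

Variable lam : Pt -> R.
Hypothesis hpos : forall p, U p -> 0 < lam p.
Hypothesis hlam : smooth n U (lamC lam).

Lemma C1_hlam (h : R -> R) : (forall x, 0 < x -> ex_derive h x) -> C1 (fun q => RtoC (h (lam q))).
Proof.
  intros Hh. destruct (smooth_C1 _ hlam) as [Hc Hd]. split.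
  - intros p Hp eps He.
    destruct (cont_R_eps h (lam p) (ex_derive_continuous _ _ (Hh _ (hpos p Hp))) eps He) as [d1 [Hd1 K1]].
    destruct (Hc p Hp d1 Hd1) as [dl [Hdl K]]. exists dl; split; auto.
    intros q Hq Hn. specialize (K q Hq Hn). unfold lamC in K.
    rewrite <- RtoC_minus' in K |- *. rewrite Cmod_R in K |- *. auto.
  - intros d Hr p Hp. destruct (Hd d Hr p Hp) as [L1 L2]. split.
    + apply (ex_derive_comp h (fun t => lam (move d t p))); auto.
      rewrite move_0. apply Hh; auto.
    + apply (ex_derive_ext (fun _ => 0)); [intro; reflexivity|apply ex_derive_const].
Qed.

Lemma pd_hlam (h : R -> R) d p : (forall x, 0 < x -> ex_derive h x) -> relevant n d -> U p ->
  pd d (fun q => RtoC (h (lam q))) p = Cmult (RtoC (Derive h (lam p))) (pd d (lamC lam) p).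
Proof.
  intros Hh Hr Hp. destruct (smooth_C1 _ hlam) as [Hc Hd]. destruct (Hd d Hr p Hp) as [L1 L2].
  change (pd d (fun q => RtoC (h (lam q))) p) with
    (Derive (fun t => h (lam (move d t p))) 0, Derive (fun _ : R => 0) 0).
  change (pd d (lamC lam) p) with
    (Derive (fun t => lam (move d t p)) 0, Derive (fun _ : R => 0) 0).
  rewrite Derive_comp; auto. rewrite move_0, Derive_const.
  apply injective_projections; simpl; ring.
  rewrite move_0; auto.
Qed.

Definition Epf (z : Z) (q : Pt) : C := RtoC (exp (IZR z * ln (lam q))).

Lemma exd_ln x : 0 < x -> ex_derive ln x.
Proof. intro H. eexists. apply is_derive_ln; auto. Qed.
Lemma exd_ez (z : Z) x : 0 < x -> ex_derive (fun y => exp (IZR z * ln y)) x.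
Proof. intro H. auto_derive. auto. Qed.

Lemma C1_loglam : C1 (loglam lam).
Proof. apply (C1_hlam ln exd_ln). Qed.
Lemma C1_Ep z : C1 (Epf z).
Proof. apply (C1_hlam (fun y => exp (IZR z * ln y)) (exd_ez z)). Qed.

Lemma pd_loglam d p : relevant n d -> U p ->
  pd d (loglam lam) p = Cmult (RtoC (/ lam p)) (pd d (lamC lam) p).
Proof.
  intros Hr Hp. unfold loglam. rewrite (pd_hlam ln d p exd_ln Hr Hp). f_equal. f_equal.
  apply is_derive_unique. apply is_derive_ln. auto.
Qed.

Lemma pd_Ep z d p : relevant n d -> U p ->
  pd d (Epf z) p = Cmult (Cmult (RtoC (IZR z)) (Epf z p)) (pd d (loglam lam) p).
Proof.
  intros Hr Hp. rewrite pd_loglam by auto. unfold Epf.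
  rewrite (pd_hlam (fun y => exp (IZR z * ln y)) d p (exd_ez z) Hr Hp).
  replace (Derive (fun y => exp (IZR z * ln y)) (lam p)) with
    (IZR z * exp (IZR z * ln (lam p)) * / lam p).
  rewrite !RtoC_mult'. apply injective_projections; simpl; ring.
  symmetry. apply is_derive_unique. specialize (hpos p Hp). auto_derive. lra.
  field. lra.
Qed.

Lemma Ep_1 : eqU (Epf 1) (lamC lam).
Proof. intros p Hp. unfold Epf, lamC. rewrite Rmult_1_l, exp_ln; auto. Qed.

Lemma Ep_m1 : eqU (Epf (-1)) (fun q => Cinv (lamC lam q)).
Proof.
  intros p Hp. unfold Epf, lamC. specialize (hpos p Hp).
  replace (IZR (-1) * ln (lam p)) with (- ln (lam p)) by (simpl; ring).
  rewrite exp_Ropp, exp_ln by auto.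
  apply injective_projections; simpl; field; lra.
Qed.

Lemma Ep_m1' p : U p -> Epf (-1) p = RtoC (/ lam p).
Proof.
  intros Hp. unfold Epf. specialize (hpos p Hp). f_equal.
  replace (IZR (-1) * ln (lam p)) with (- ln (lam p)) by (simpl; ring).
  rewrite exp_Ropp, exp_ln by auto. auto.
Qed.

Inductive ex1 := Lf (F : Pt -> C) | Cs (c : C) | Ad (a b : ex1) | Mu (a b : ex1) | Ep1 (z : Z) | Lg.

Fixpoint eval1 (e : ex1) : Pt -> C :=
  match e with
  | Lf F => F
  | Cs c => fun _ => c
  | Ad a b => fun q => Cplus (eval1 a q) (eval1 b q)
  | Mu a b => fun q => Cmult (eval1 a q) (eval1 b q)
  | Ep1 z => Epf z
  | Lg => loglam lam
  end.

Fixpoint wf1 (e : ex1) : Prop :=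
  match e with
  | Lf F => smooth n U F
  | Ad a b | Mu a b => wf1 a /\ wf1 b
  | _ => True
  end.

Fixpoint Dpd1 (d : dir) (e : ex1) : ex1 :=
  match e with
  | Lf F => Lf (pd d F)
  | Cs _ => Cs (RtoC 0)
  | Ad a b => Ad (Dpd1 d a) (Dpd1 d b)
  | Mu a b => Ad (Mu (Dpd1 d a) b) (Mu a (Dpd1 d b))
  | Ep1 z => Mu (Mu (Cs (RtoC (IZR z))) (Ep1 z)) (Mu (Ep1 (-1)) (Lf (pd d (lamC lam))))
  | Lg => Mu (Ep1 (-1)) (Lf (pd d (lamC lam)))
  end.

Lemma key1 e : wf1 e -> C1 (eval1 e) /\
  forall d, relevant n d -> wf1 (Dpd1 d e) /\ eqU (pd d (eval1 e)) (eval1 (Dpd1 d e)).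
Proof.
  induction e as [F|c|a IHa b IHb|a IHa b IHb|z|]; simpl; intros W.
  - split. now apply smooth_C1. intros d Hr; split. now apply smooth_pd. apply eqU_refl.
  - split. apply C1_const. intros d Hr; split; auto. intros p Hp. apply pd_const.
  - destruct W as [Wa Wb]. destruct (IHa Wa) as [Ca Da]. destruct (IHb Wb) as [Cb Db].
    split. now apply C1_add. intros d Hr. destruct (Da d Hr) as [Wa' Ea]. destruct (Db d Hr) as [Wb' Eb].
    split. simpl; auto. intros p Hp. rewrite pd_add by auto. simpl. rewrite Ea, Eb by auto. auto.
  - destruct W as [Wa Wb]. destruct (IHa Wa) as [Ca Da]. destruct (IHb Wb) as [Cb Db].
    split. now apply C1_mul. intros d Hr. destruct (Da d Hr) as [Wa' Ea]. destruct (Db d Hr) as [Wb' Eb].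
    split. simpl; auto. intros p Hp. rewrite pd_mul by auto. simpl. rewrite Ea, Eb by auto. auto.
  - split. apply C1_Ep. intros d Hr. split. simpl; split; [split; exact I| split; [exact I| now apply smooth_pd]].
    intros p Hp. simpl. rewrite pd_Ep, pd_loglam, Ep_m1' by auto. auto.
  - split. apply C1_loglam. intros d Hr. split. simpl; split; [exact I| now apply smooth_pd].
    intros p Hp. simpl. rewrite pd_loglam, Ep_m1' by auto. auto.
Qed.

Lemma smooth1 e : wf1 e -> smooth n U (eval1 e).
Proof.
  intros W. apply (smooth_coind (fun H => exists e, wf1 e /\ eqU (eval1 e) H)); [|eauto using eqU_refl].
  intros H [e' [W' E']]. destruct (key1 e' W') as [C' D']. split.
  - eapply C1_loc; eauto.
  - intros d Hr. destruct (D' d Hr) as [W2 E2]. exists (Dpd1 d e'). split; auto.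
    eapply eqU_trans; [apply eqU_sym; exact E2|]. apply pd_loc; auto.
Qed.

Lemma smooth_add F G : smooth n U F -> smooth n U G -> smooth n U (fun q => Cplus (F q) (G q)).
Proof. intros; apply (smooth1 (Ad (Lf F) (Lf G))); simpl; auto. Qed.
Lemma smooth_mul F G : smooth n U F -> smooth n U G -> smooth n U (fun q => Cmult (F q) (G q)).
Proof. intros; apply (smooth1 (Mu (Lf F) (Lf G))); simpl; auto. Qed.
Lemma smooth_const c : smooth n U (fun _ => c).
Proof. apply (smooth1 (Cs c)); simpl; auto. Qed.
Lemma smooth_Ep z : smooth n U (Epf z).
Proof. apply (smooth1 (Ep1 z)); simpl; auto. Qed.
Lemma smooth_loglam : smooth n U (loglam lam).
Proof. apply (smooth1 Lg); simpl; auto. Qed.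

Lemma near2 d1 d2 dl p u v : relevant n d1 -> relevant n d2 -> 0 < dl ->
  Rabs u < dl/2 -> Rabs v < dl/2 -> near_pt n dl p (move d1 u (move d2 v p)).
Proof.
  intros H1 H2 Hd Hu Hv. replace dl with (dl/2 + dl/2) by field.
  apply near_move; auto. apply near_move0; auto. lra.
Qed.

Section Comp.
Variable pi : C -> R.
Hypothesis Hpd : forall G d q, pi (pd d G q) = Derive (fun t => pi (G (move d t q))) 0.
Hypothesis Hex : forall G d q, C1 G -> relevant n d -> U q -> ex_derive (fun t => pi (G (move d t q))) 0.
Hypothesis Hlin : forall a b, pi (Cminus a b) = pi a - pi b.
Hypothesis Hle : forall a, Rabs (pi a) <= Cmod a.

Lemma Dcomp G d X s : Derive (fun t => pi (G (move d t X))) s = pi (pd d G (move d s X)).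
Proof.
  rewrite Derive_shift, Hpd. apply Derive_ext. intro t. now rewrite move_move.
Qed.

Lemma Excomp G d X s : C1 G -> relevant n d -> U (move d s X) ->
  ex_derive (fun t => pi (G (move d t X))) s.
Proof.
  intros HG Hr HU. apply ex_derive_shift.
  eapply ex_derive_ext; [|apply (Hex G d (move d s X)); auto]. intro t; simpl. now rewrite move_move.
Qed.

Lemma schwarz_pi F d1 d2 p : smooth n U F -> relevant n d1 -> relevant n d2 -> U p ->
  pi (pd d1 (pd d2 F) p) = pi (pd d2 (pd d1 F) p).
Proof.
  intros HF H1 H2 Hp.
  assert (S1 : smooth n U (pd d1 F)) by now apply smooth_pd.
  assert (S2 : smooth n U (pd d2 F)) by now apply smooth_pd.
  assert (S12 : smooth n U (pd d1 (pd d2 F))) by now apply smooth_pd.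
  assert (S21 : smooth n U (pd d2 (pd d1 F))) by now apply smooth_pd.
  set (f := fun z t => pi (F (move d2 t (move d1 z p)))).
  assert (L : pi (pd d1 (pd d2 F) p) = Derive (fun z => Derive (fun t => f z t) 0) 0).
  { rewrite Hpd. apply Derive_ext. intro z. unfold f. now rewrite Hpd. }
  assert (R : pi (pd d2 (pd d1 F) p) = Derive (fun z => Derive (fun t => f t z) 0) 0).
  { rewrite Hpd. apply Derive_ext. intro z. unfold f. rewrite Hpd. apply Derive_ext. intro t.
    now rewrite move_comm. }
  rewrite L, R. clear L R.
  destruct (hU p Hp) as [dU [HdU KU]].
  assert (NU : forall u v, Rabs u < dU/2 -> Rabs v < dU/2 ->
      U (move d1 u (move d2 v p)) /\ U (move d2 v (move d1 u p))).
  { intros u v Hu Hv. rewrite <- move_comm. split; apply KU; apply near2; auto. }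
  assert (I1 : forall u v, Derive (fun t => f u t) v = pi (pd d2 F (move d1 u (move d2 v p)))).
  { intros u v. unfold f. rewrite Dcomp. now rewrite move_comm. }
  assert (I2 : forall u v, Derive (fun t => f t v) u = pi (pd d1 F (move d2 v (move d1 u p)))).
  { intros u v. unfold f. rewrite <- (move_comm d1 d2 u v p). rewrite <- Dcomp.
    apply Derive_ext. intro t. now rewrite move_comm. }
  assert (I3 : forall u v, Derive (fun z => Derive (fun t => f z t) v) u
                       = pi (pd d1 (pd d2 F) (move d1 u (move d2 v p)))).
  { intros u v. rewrite <- Dcomp. apply Derive_ext. intro z. rewrite I1. reflexivity. }
  assert (I4 : forall u v, Derive (fun z => Derive (fun t => f t z) u) v
                       = pi (pd d2 (pd d1 F) (move d2 v (move d1 u p)))).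
  { intros u v. rewrite <- Dcomp. apply Derive_ext. intro z. rewrite I2. reflexivity. }
  assert (HdU2 : 0 < dU/2) by lra.
  apply Schwarz.
  - exists (mkposreal _ HdU2). intros u v Hu Hv. simpl in Hu, Hv. rewrite Rminus_0_r in Hu, Hv.
    destruct (NU u v Hu Hv) as [N1 N2]. split; [|split; [|split]].
    + unfold f. eapply ex_derive_ext;
        [|apply (Excomp F d1 (move d2 v p) u); [now apply smooth_C1|exact H1|exact N1]].
      intro t; simpl. now rewrite move_comm.
    + unfold f. apply (Excomp F d2 (move d1 u p) v); [now apply smooth_C1|exact H2|exact N2].
    + eapply ex_derive_ext;
        [|apply (Excomp (pd d2 F) d1 (move d2 v p) u); [now apply smooth_C1|exact H1|exact N1]].
      intro t; simpl. now rewrite I1.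
    + eapply ex_derive_ext;
        [|apply (Excomp (pd d1 F) d2 (move d1 u p) v); [now apply smooth_C1|exact H2|exact N2]].
      intro t; simpl. now rewrite I2.
  - intros eps. destruct (smooth_C1 _ S12) as [Hc _].
    destruct (Hc p Hp eps (cond_pos eps)) as [dc [Hdc Kc]].
    assert (Hm : 0 < Rmin dU dc / 2) by (apply Rdiv_lt_0_compat; [apply Rmin_pos|]; lra).
    exists (mkposreal _ Hm). intros u v Hu Hv. simpl in Hu, Hv. rewrite Rminus_0_r in Hu, Hv.
    rewrite !I3, !move_0. rewrite <- Hlin. eapply Rle_lt_trans; [apply Hle|].
    assert (Hu' : Rabs u < dU/2) by (assert (Rmin dU dc <= dU) by apply Rmin_l; lra).
    assert (Hv' : Rabs v < dU/2) by (assert (Rmin dU dc <= dU) by apply Rmin_l; lra).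
    apply Kc. apply (NU u v Hu' Hv').
    apply near_pt_mono with (Rmin dU dc). apply Rmin_r. apply near2; auto. apply Rmin_pos; lra.
  - intros eps. destruct (smooth_C1 _ S21) as [Hc _].
    destruct (Hc p Hp eps (cond_pos eps)) as [dc [Hdc Kc]].
    assert (Hm : 0 < Rmin dU dc / 2) by (apply Rdiv_lt_0_compat; [apply Rmin_pos|]; lra).
    exists (mkposreal _ Hm). intros u v Hu Hv. simpl in Hu, Hv. rewrite Rminus_0_r in Hu, Hv.
    rewrite !I4, !move_0. rewrite <- Hlin. eapply Rle_lt_trans; [apply Hle|].
    assert (Hu' : Rabs u < dU/2) by (assert (Rmin dU dc <= dU) by apply Rmin_l; lra).
    assert (Hv' : Rabs v < dU/2) by (assert (Rmin dU dc <= dU) by apply Rmin_l; lra).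
    apply Kc. apply (NU u v Hu' Hv').
    rewrite <- move_comm.
    apply near_pt_mono with (Rmin dU dc). apply Rmin_r. apply near2; auto. apply Rmin_pos; lra.
Qed.
End Comp.

Lemma pd_comm F d1 d2 p : smooth n U F -> relevant n d1 -> relevant n d2 -> U p ->
  pd d1 (pd d2 F) p = pd d2 (pd d1 F) p.
Proof.
  intros HF H1 H2 Hp. apply injective_projections.
  - apply (schwarz_pi Re); auto.
    + intros G d q HG Hr Hq. apply (proj2 HG d Hr q Hq).
    + intros a; apply re_le_Cmod.
  - apply (schwarz_pi Im); auto.
    + intros G d q HG Hr Hq. apply (proj2 HG d Hr q Hq).
    + intros a. eapply Rle_trans; [apply Rmax_r|apply Rmax_Cmod].
Qed.

Local Open Scope C_scope.

Lemma pd_lin F G d p a b : C1 F -> C1 G -> relevant n d -> U p ->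
  pd d (fun q => a * F q + b * G q) p = a * pd d F p + b * pd d G p.
Proof.
  intros HF HG Hr Hp.
  rewrite (pd_add (fun q => a * F q) (fun q => b * G q)); auto;
    try (apply C1_mul; auto; apply C1_const).
  rewrite (pd_mul (fun _ => a) F), (pd_mul (fun _ => b) G); auto; try apply C1_const.
  rewrite !pd_const. ring.
Qed.

Variables k l : nat.
Hypothesis hk : (k < n)%nat.
Hypothesis hl : (l < n)%nat.

Inductive op := OK | OLb | OZ | OZb.

Definition wop (o : op) (F : Pt -> C) : Pt -> C :=
  match o with OK => ds k F | OLb => dsb l F | OZ => dz F | OZb => dzb F end.

Definition od1 o := match o with OK => DReS k | OLb => DReS l | _ => DReZ end.
Definition od2 o := match o with OK => DImS k | OLb => DImS l | _ => DImZ end.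
Definition oc2 o : C := match o with OK | OZ => - (/ 2 * Ci) | _ => / 2 * Ci end.

Lemma rel1 o : relevant n (od1 o). Proof. destruct o; simpl; auto. Qed.
Lemma rel2 o : relevant n (od2 o). Proof. destruct o; simpl; auto. Qed.

Lemma wop_lin o F : wop o F = fun q => / 2 * pd (od1 o) F q + oc2 o * pd (od2 o) F q.
Proof.
  apply functional_extensionality; intro q.
  destruct o; simpl; unfold ds, dsb, dz, dzb; ring.
Qed.

Lemma smooth_wop o F : smooth n U F -> smooth n U (wop o F).
Proof.
  intro HF. rewrite wop_lin.
  apply smooth_add; apply smooth_mul; try apply smooth_const; apply smooth_pd; auto using rel1, rel2.
Qed.

Lemma C1_wop o F : smooth n U F -> C1 (wop o F).
Proof. intro; apply smooth_C1, smooth_wop; auto. Qed.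

Lemma wop_loc o F G : eqU F G -> eqU (wop o F) (wop o G).
Proof.
  intros HE p Hp. rewrite !wop_lin.
  rewrite (pd_loc F G (od1 o)), (pd_loc F G (od2 o)); auto using rel1, rel2.
Qed.

Lemma wop_add o F G p : C1 F -> C1 G -> U p ->
  wop o (fun q => F q + G q) p = wop o F p + wop o G p.
Proof.
  intros HF HG Hp. rewrite !wop_lin. rewrite !pd_add; auto using rel1, rel2. ring.
Qed.

Lemma wop_mul o F G p : C1 F -> C1 G -> U p ->
  wop o (fun q => F q * G q) p = wop o F p * G p + F p * wop o G p.
Proof.
  intros HF HG Hp. rewrite !wop_lin. rewrite !pd_mul; auto using rel1, rel2. ring.
Qed.

Lemma wop_const o c p : wop o (fun _ => c) p = RtoC 0.
Proof. rewrite wop_lin. rewrite !pd_const. ring. Qed.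

Lemma wop_Ep o z p : U p -> wop o (Epf z) p = RtoC (IZR z) * Epf z p * wop o (loglam lam) p.
Proof.
  intros Hp. rewrite !wop_lin. rewrite !pd_Ep; auto using rel1, rel2. ring.
Qed.

Lemma wop_comm o1 o2 F p : smooth n U F -> U p ->
  wop o1 (wop o2 F) p = wop o2 (wop o1 F) p.
Proof.
  intros HF Hp. rewrite (wop_lin o2 F), (wop_lin o1 F). rewrite !wop_lin.
  assert (C11 : C1 (pd (od1 o1) F)) by (apply smooth_C1, smooth_pd; auto using rel1).
  assert (C12 : C1 (pd (od2 o1) F)) by (apply smooth_C1, smooth_pd; auto using rel2).
  assert (C21 : C1 (pd (od1 o2) F)) by (apply smooth_C1, smooth_pd; auto using rel1).
  assert (C22 : C1 (pd (od2 o2) F)) by (apply smooth_C1, smooth_pd; auto using rel2).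
  rewrite !pd_lin; auto using rel1, rel2.
  rewrite (pd_comm F (od1 o1) (od1 o2)), (pd_comm F (od1 o1) (od2 o2)),
          (pd_comm F (od2 o1) (od1 o2)), (pd_comm F (od2 o1) (od2 o2)); auto using rel1, rel2.
  ring.
Qed.

Fixpoint iterw (w : list op) (F : Pt -> C) : Pt -> C :=
  match w with [] => F | o :: w' => wop o (iterw w' F) end.

Lemma iterw_app w1 w2 F : iterw (w1 ++ w2) F = iterw w1 (iterw w2 F).
Proof. induction w1; simpl; auto. now rewrite IHw1. Qed.

Lemma smooth_iterw w F : smooth n U F -> smooth n U (iterw w F).
Proof. induction w; simpl; auto. intro; apply smooth_wop; auto. Qed.

Lemma iterw_loc w F G : eqU F G -> eqU (iterw w F) (iterw w G).
Proof. induction w; simpl; auto. intro; apply wop_loc; auto. Qed.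

Lemma iterw_perm w w' F : Permutation w w' -> smooth n U F -> eqU (iterw w F) (iterw w' F).
Proof.
  intros HP HF. induction HP; simpl.
  - apply eqU_refl.
  - apply wop_loc; auto.
  - intros p Hp. apply wop_comm; auto. now apply smooth_iterw.
  - eapply eqU_trans; eauto.
Qed.

Variable f : Pt -> C.
Hypothesis hf : smooth n U f.
Hypothesis hcurv : forall p, U p -> dz (dzb (loglam lam)) p = lamC lam p.

Definition leaf (b : bool) : Pt -> C := if b then f else loglam lam.

Lemma smooth_leaf b : smooth n U (leaf b).
Proof. destruct b; simpl; auto using smooth_loglam. Qed.

Inductive ex2 := At (w : list op) (b : bool) | E2 (z : Z) | K2 (c : Z) | A2 (a b : ex2) | M2 (a b : ex2).

Fixpoint eval2 (e : ex2) : Pt -> C :=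
  match e with
  | At w b => iterw w (leaf b)
  | E2 z => Epf z
  | K2 c => fun _ => RtoC (IZR c)
  | A2 a b => fun q => eval2 a q + eval2 b q
  | M2 a b => fun q => eval2 a q * eval2 b q
  end.

Fixpoint D2 (o : op) (e : ex2) : ex2 :=
  match e with
  | At w b => At (o :: w) b
  | E2 z => M2 (M2 (K2 z) (E2 z)) (At [o] false)
  | K2 _ => K2 0
  | A2 a b => A2 (D2 o a) (D2 o b)
  | M2 a b => A2 (M2 (D2 o a) b) (M2 a (D2 o b))
  end.

Fixpoint Dword (w : list op) (e : ex2) : ex2 :=
  match w with [] => e | o :: w' => D2 o (Dword w' e) end.

Lemma smooth2 e : smooth n U (eval2 e).
Proof.
  induction e; simpl.
  - apply smooth_iterw, smooth_leaf.
  - apply smooth_Ep.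
  - apply smooth_const.
  - apply smooth_add; auto.
  - apply smooth_mul; auto.
Qed.

Lemma D2_ok o e : eqU (wop o (eval2 e)) (eval2 (D2 o e)).
Proof.
  induction e; intros p Hp; simpl.
  - reflexivity.
  - rewrite wop_Ep by auto. reflexivity.
  - rewrite wop_const. reflexivity.
  - rewrite wop_add; auto using smooth_C1, smooth2. rewrite IHe1, IHe2; auto.
  - rewrite wop_mul; auto using smooth_C1, smooth2. rewrite IHe1, IHe2; auto.
Qed.

Lemma Dword_ok w e : eqU (iterw w (eval2 e)) (eval2 (Dword w e)).
Proof.
  induction w; simpl. apply eqU_refl.
  eapply eqU_trans. apply wop_loc, IHw. apply D2_ok.
Qed.

Definition key (o : op) : nat := match o with OK => 0 | OLb => 1 | OZ => 2 | OZb => 3 end.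
Fixpoint insw (o : op) (w : list op) : list op :=
  match w with
  | [] => [o]
  | x :: w' => if Nat.leb (key o) (key x) then o :: x :: w' else x :: insw o w'
  end.
Fixpoint sortw (w : list op) : list op :=
  match w with [] => [] | x :: w' => insw x (sortw w') end.

Lemma insw_perm o w : Permutation (insw o w) (o :: w).
Proof.
  induction w; simpl. auto. destruct (Nat.leb (key o) (key a)). auto.
  eapply perm_trans; [apply perm_skip, IHw|]. apply perm_swap.
Qed.

Lemma sortw_perm w : Permutation (sortw w) w.
Proof.
  induction w; simpl. auto. eapply perm_trans; [apply insw_perm|]. auto.
Qed.

Definition opeqb (a b : op) : bool := Nat.eqb (key a) (key b).
Lemma opeqb_eq a b : opeqb a b = true -> a = b.
Proof. destruct a, b; simpl; auto; discriminate. Qed.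

Fixpoint rem1 (o : op) (w : list op) : list op :=
  match w with [] => [] | x :: w' => if opeqb x o then w' else x :: rem1 o w' end.
Definition memb (o : op) (w : list op) : bool := existsb (opeqb o) w.

Lemma rem1_perm o w : memb o w = true -> Permutation w (o :: rem1 o w).
Proof.
  induction w; simpl. discriminate. intro H.
  destruct (opeqb a o) eqn:E.
  - apply opeqb_eq in E; subst; auto.
  - apply Bool.orb_true_iff in H. destruct H as [H|H].
    + apply opeqb_eq in H; subst. destruct a; simpl in E; discriminate.
    + eapply perm_trans; [apply perm_skip, IHw; auto|]. apply perm_swap.
Qed.

Lemma rem1_mem o o' w : memb o w = true -> opeqb o o' = false -> memb o (rem1 o' w) = true.
Proof.
  induction w; simpl. discriminate. intros H N.
  destruct (opeqb a o') eqn:E.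
  - apply opeqb_eq in E; subst. rewrite N in H. simpl in H. auto.
  - simpl. apply Bool.orb_true_iff in H.
    destruct H as [H|H]; [rewrite H; auto | rewrite IHw; auto; apply Bool.orb_true_r].
Qed.

Definition hasZZ (w : list op) : bool := memb OZ w && memb OZb w.
Definition remZZ (w : list op) : list op := rem1 OZ (rem1 OZb w).

Lemma remZZ_perm w : hasZZ w = true -> Permutation w (remZZ w ++ [OZ; OZb]).
Proof.
  unfold hasZZ, remZZ. intro H. apply andb_prop in H. destruct H as [H1 H2].
  eapply perm_trans. apply (rem1_perm OZb w H2).
  eapply perm_trans. apply perm_skip. apply (rem1_perm OZ); apply rem1_mem; auto.
  eapply perm_trans. apply perm_swap.
  eapply perm_trans; [|apply Permutation_app_comm]. simpl. auto.
Qed.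

Lemma curv_red w : hasZZ w = true ->
  eqU (iterw w (loglam lam)) (eval2 (Dword (remZZ w) (E2 1))).
Proof.
  intro H. eapply eqU_trans. apply iterw_perm. apply remZZ_perm; auto. apply smooth_loglam.
  rewrite iterw_app. simpl.
  eapply eqU_trans. apply iterw_loc. exact hcurv.
  eapply eqU_trans. apply iterw_loc. apply eqU_sym, Ep_1.
  apply (Dword_ok (remZZ w) (E2 1)).
Qed.

Fixpoint norm (fuel : nat) : ex2 -> ex2 :=
  fix go (e : ex2) : ex2 :=
  match e with
  | At w true => At (sortw w) true
  | At w false =>
      if hasZZ w then
        match fuel with 0 => At w false | S fu => norm fu (Dword (remZZ w) (E2 1)) end
      else At (sortw w) false
  | A2 a b => A2 (go a) (go b)
  | M2 a b => M2 (go a) (go b)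
  | e => e
  end.

Lemma norm_ok fuel e : eqU (eval2 e) (eval2 (norm fuel e)).
Proof.
  revert e. induction fuel; intro e; induction e; simpl; try apply eqU_refl;
    try (intros p Hp; simpl; rewrite IHe1, IHe2; auto; fail).
  - destruct b; simpl.
    + apply iterw_perm. apply Permutation_sym, sortw_perm. first [exact hf | exact smooth_loglam].
    + destruct (hasZZ w). apply eqU_refl.
      apply iterw_perm. apply Permutation_sym, sortw_perm. first [exact hf | exact smooth_loglam].
  - destruct b; simpl.
    + apply iterw_perm. apply Permutation_sym, sortw_perm. first [exact hf | exact smooth_loglam].
    + destruct (hasZZ w) eqn:E.
      * eapply eqU_trans. apply curv_red; auto. apply IHfuel.
      * apply iterw_perm. apply Permutation_sym, sortw_perm. first [exact hf | exact smooth_loglam].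
Qed.

Lemma pd_conj F d p : pd d (fun q => Cconj (F q)) p = Cconj (pd d F p).
Proof.
  change (pd d (fun q => Cconj (F q)) p) with
    (Derive (fun t => Re (F (move d t p))) 0, Derive (fun t => (- Im (F (move d t p)))%R) 0).
  rewrite Derive_opp. reflexivity.
Qed.

Lemma ds_conj i G q : Cconj (ds i G q) = dsb i (fun q => Cconj (G q)) q.
Proof.
  unfold ds, dsb. rewrite !pd_conj.
  destruct (pd (DReS i) G q) as [a b]. destruct (pd (DImS i) G q) as [c d].
  apply injective_projections; simpl; field.
Qed.

Lemma dzb_conj G q : Cconj (dzb G q) = dz (fun q => Cconj (G q)) q.
Proof.
  unfold dz, dzb. rewrite !pd_conj.
  destruct (pd DReZ G q) as [a b]. destruct (pd DImZ G q) as [c d].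
  apply injective_projections; simpl; field.
Qed.

Lemma conj_loglam : (fun q => Cconj (loglam lam q)) = loglam lam.
Proof.
  apply functional_extensionality; intro q. unfold loglam.
  apply injective_projections; simpl; ring.
Qed.

Lemma conj_inv_lamC q : Cconj (/ lamC lam q) = / lamC lam q.
Proof. unfold lamC. apply injective_projections; simpl; unfold Rdiv; ring. Qed.

Lemma conj_opp z : Cconj (- z) = - Cconj z.
Proof. apply injective_projections; simpl; ring. Qed.

Definition aK := M2 (K2 (-1)) (M2 (E2 (-1)) (At [OK; OZb] false)).
Definition aL := M2 (K2 (-1)) (M2 (E2 (-1)) (At [OLb; OZ] false)).
Definition AK := D2 OZb aK.
Definition AL := D2 OZ aL.
Definition xiE e := M2 (K2 (-1)) (M2 (E2 (-1)) (D2 OZ (M2 AK (D2 OZ e)))).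
Definition vbarE e := A2 (D2 OLb e) (M2 aL (D2 OZb e)).
Definition eE := A2 (At [OK; OLb] false) (M2 (K2 (-1)) (M2 (E2 1) (M2 aK aL))).
Definition fE := M2 AK AL.
Definition PE e := D2 OZ (M2 (E2 (-1)) (D2 OZ e)).
Definition PbE e := D2 OZb (M2 (E2 (-1)) (D2 OZb e)).
Definition BoxE e := M2 (K2 (-1)) (M2 (E2 (-1)) (D2 OZ (D2 OZb e))).

Lemma wopD o F e : eqU F (eval2 e) -> eqU (wop o F) (eval2 (D2 o e)).
Proof. intro H. eapply eqU_trans. apply wop_loc, H. apply D2_ok. Qed.

Lemma a_ok : eqU (a_ lam k) (eval2 aK).
Proof.
  intros p Hp. unfold a_, aK. cbn [eval2 iterw]. rewrite (Ep_m1 p Hp). simpl. ring.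
Qed.

Lemma aL_ok : eqU (fun q => Cconj (a_ lam l q)) (eval2 aL).
Proof.
  intros p Hp. unfold a_. rewrite conj_opp, Cmult_conj, conj_inv_lamC, ds_conj.
  assert (E : (fun q => Cconj (dzb (loglam lam) q)) = dz (loglam lam)).
  { apply functional_extensionality; intro q. rewrite dzb_conj, conj_loglam. reflexivity. }
  rewrite E. unfold aL. cbn [eval2 iterw]. rewrite (Ep_m1 p Hp). simpl. ring.
Qed.

Lemma A_ok : eqU (A_ lam k) (eval2 AK).
Proof. apply (wopD OZb). apply a_ok. Qed.

Lemma AL_ok : eqU (fun q => Cconj (A_ lam l q)) (eval2 AL).
Proof.
  eapply eqU_trans; [|apply (wopD OZ _ _ aL_ok)].
  intros p Hp. unfold A_. rewrite dzb_conj. reflexivity.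
Qed.

Lemma xi_ok F e : eqU F (eval2 e) -> eqU (xi_ lam k F) (eval2 (xiE e)).
Proof.
  intro H.
  assert (G : eqU (fun q => A_ lam k q * dz F q) (eval2 (M2 AK (D2 OZ e)))).
  { intros p Hp. cbn [eval2]. rewrite (A_ok p Hp). rewrite <- (wopD OZ F e H p Hp). reflexivity. }
  intros p Hp. unfold xi_, xiE. cbn [eval2]. rewrite <- (wopD OZ _ _ G p Hp).
  rewrite (Ep_m1 p Hp). simpl. ring.
Qed.

Lemma vbar_ok F e : eqU F (eval2 e) -> eqU (vbar_ lam l F) (eval2 (vbarE e)).
Proof.
  intros H p Hp. unfold vbar_, vbarE. cbn [eval2].
  rewrite <- (wopD OLb F e H p Hp), <- (wopD OZb F e H p Hp).
  rewrite <- (aL_ok p Hp). reflexivity.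
Qed.

Lemma e_ok : eqU (e_ lam k l) (eval2 eE).
Proof.
  intros p Hp. unfold e_, eE. cbn [eval2 iterw]. rewrite <- (a_ok p Hp), <- (aL_ok p Hp), (Ep_1 p Hp). simpl. ring.
Qed.

Lemma f_ok : eqU (f_ lam k l) (eval2 fE).
Proof.
  intros p Hp. unfold f_, fE. cbn [eval2]. rewrite <- (A_ok p Hp), <- (AL_ok p Hp). reflexivity.
Qed.

Lemma P_ok F e : eqU F (eval2 e) -> eqU (P_ lam F) (eval2 (PE e)).
Proof.
  intro H. apply (wopD OZ). intros p Hp. cbn [eval2]. rewrite <- (wopD OZ F e H p Hp), (Ep_m1 p Hp). reflexivity.
Qed.

Lemma Pb_ok F e : eqU F (eval2 e) -> eqU (Pb_ lam F) (eval2 (PbE e)).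
Proof.
  intro H. apply (wopD OZb). intros p Hp. cbn [eval2]. rewrite <- (wopD OZb F e H p Hp), (Ep_m1 p Hp). reflexivity.
Qed.

Lemma Box_ok F e : eqU F (eval2 e) -> eqU (Box lam F) (eval2 (BoxE e)).
Proof.
  intros H p Hp. unfold Box, BoxE. cbn [eval2]. rewrite <- (wopD OZ _ _ (wopD OZb F e H) p Hp), (Ep_m1 p Hp).
  simpl. ring.
Qed.

Definition fl := At [] true.
Definition BigL := A2 (vbarE (xiE fl)) (M2 (K2 (-1)) (xiE (vbarE fl))).
Definition BigR := A2 (A2 (M2 (PbE eE) (PE fl)) (M2 (K2 (-2)) (M2 fE (BoxE fl))))
                      (M2 (M2 (E2 (-1)) (D2 OZ fE)) (D2 OZb fl)).

Lemma main p : U p ->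
  vbar_ lam l (xi_ lam k f) p - xi_ lam k (vbar_ lam l f) p
   = Pb_ lam (e_ lam k l) p * P_ lam f p
     - 2 * f_ lam k l p * Box lam f p
     + / lamC lam p * dz (f_ lam k l) p * dzb f p.
Proof.
  intros Hp.
  assert (H0 : eqU f (eval2 fl)) by apply eqU_refl.
  change (dz (f_ lam k l) p) with (wop OZ (f_ lam k l) p).
  change (dzb f p) with (wop OZb f p).
  rewrite (vbar_ok _ _ (xi_ok _ _ H0) p Hp), (xi_ok _ _ (vbar_ok _ _ H0) p Hp).
  rewrite (Pb_ok _ _ e_ok p Hp), (P_ok _ _ H0 p Hp), (f_ok p Hp), (Box_ok _ _ H0 p Hp).
  rewrite ((wopD OZ _ _ f_ok) p Hp), ((wopD OZb _ _ H0) p Hp).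
  rewrite <- (Ep_m1 p Hp).
  transitivity (eval2 BigL p). { cbn [eval2 BigL]. ring. }
  transitivity (eval2 BigR p). 2:{ cbn [eval2 BigR]. ring. }
  rewrite (norm_ok 10 BigL p Hp), (norm_ok 10 BigR p Hp).
  remember (norm 10 BigL) as NL eqn:HNL. vm_compute in HNL. subst NL.
  remember (norm 10 BigR) as NR eqn:HNR. vm_compute in HNR. subst NR.
  cbn [eval2].
  rewrite (Ep_1 p Hp), (Ep_m1 p Hp).
  assert (Hl : lamC lam p <> RtoC 0).
  { unfold lamC. intro E. apply (f_equal fst) in E. simpl in E. specialize (hpos p Hp). lra. }
  field. exact Hl.
Qed.
End Smooth.


Theorem lemma3p7 (g : nat) (hg : (2 <= g)%nat)
  (U : Pt -> Prop) (lam : Pt -> R)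
  (hU : open_chart (3 * g - 3) U)
  (hpos : forall p, U p -> (0 < lam p)%R)
  (hsm : smooth (3 * g - 3) U (lamC lam))
  (hcurv : forall p, U p -> dz (dzb (loglam lam)) p = lamC lam p)
  (f : Pt -> C) (hf : smooth (3 * g - 3) U f)
  (k l : nat) (hk : (k < 3 * g - 3)%nat) (hl : (l < 3 * g - 3)%nat)
  (p : Pt) (hp : U p) :
  (vbar_ lam l (xi_ lam k f) p - xi_ lam k (vbar_ lam l f) p
   = Pb_ lam (e_ lam k l) p * P_ lam f p
     - 2 * f_ lam k l p * Box lam f p
     + / lamC lam p * dz (f_ lam k l) p * dzb f p)%C.
Proof.
  eapply main; eauto.
Qed.
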